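(* Let $n$ be the number of processes, let $m$ be a positive integer, and let $k$ be a real number with $k\ge\sqrt{2n}$. Algorithm A (described in the context), with $\mathit{logNumIncrems}$ implemented as a $\lceil\log_2 m\rceil$-bounded max-register, is a wait-free linearizable implementation of a $k$-multiplicative-accurate $m$-bounded counter. When the max-register is implemented from read-write registers by an $h$-bounded max-register algorithm whose MaxRead and MaxWrite each take $O(\log h)$ steps, every Read and every Increment takes $O(\log\log m)$ steps.
   Context: Model: $n$ asynchronous, crash-prone processes communicate through linearizable shared objects. An implementation is wait-free if every process that takes infinitely many steps completes infinitely many operations. An implementation is linearizable if, in every execution, the complete operations and some of the incomplete operations can be totally ordered so that (a) the order respects the real-time order of non-overlapping operations and (b) the sequence satisfies the object's sequential specification. A max-register supports MaxWrite$(v)$ and MaxRead. A MaxRead returns the largest value among all preceding MaxWrites, or the initial value if there was none. It is $h$-bounded if no MaxWrite argument exceeds $h$. A $k$-multiplicative-accurate counter supports Increment and Read. In its sequential specification, each Read returns a value $x$ with $v/k\le x\le kv$, where $v$ is the number of preceding Increments. It is $m$-bounded if attention is restricted to executions with at most $m$ Increments. Algorithm A has one shared max-register $\mathit{logNumIncrems}$ with initial value $-1$. Each process has local variables $\mathit{lcounter}=0$, $\mathit{threshold}=1$ and $\mathit{nextVal}=0$. Increment(): - $\mathit{lcounter}\gets\mathit{lcounter}+1$. - If $\mathit{lcounter}=\mathit{threshold}$, then: - $\mathit{logNumIncrems}$.MaxWrite$(\mathit{nextVal})$; - $\mathit{nextVal}\gets \mathit{nextVal}+1$; - $\mathit{lcounter}\gets0$;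 - if $\mathit{nextVal}\ge2$, then $\mathit{threshold}\gets2\cdot\mathit{threshold}$. Read(): - $r\gets\mathit{logNumIncrems}$.MaxRead(). - If $r\ge0$, return $k\cdot2^r$; otherwise return $0$. *)

(* Defs.v *)
From Stdlib Require Import Reals List Arith ZArith.
Import ListNotations.

(** * Model of Algorithm A running on n asynchronous crash-prone processes,
    with logNumIncrems an atomic (linearizable) max-register. *)

Inductive OpKind := OInc | ORead.

Inductive Resp := RInc | RRead (x : R).

Definition kind_of (r : Resp) : OpKind :=
  match r with RInc => OInc | RRead _ => ORead end.

Inductive PC :=
| Idle
| IncWrite (v : nat)   (* inside Increment, about to do logNumIncrems.MaxWrite(v) *)
| IncRet
| ReadRead             (* inside Read, about to do logNumIncrems.MaxRead() *)
| ReadRet (x : R).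

Record LState := mkL { lcounter : nat; threshold : nat; nextVal : nat; pc : PC }.

Definition init_local : LState := mkL 0 1 0 Idle.

(** Global configuration: local states of processes and the max-register
    logNumIncrems (initial value -1). *)
Record Config := mkC { loc : nat -> LState; reg : Z }.

Definition init_config : Config := mkC (fun _ => init_local) (-1)%Z.

(** Events: invocations/responses of the counter operations, and the
    accesses to the shared max-register. Every step emits exactly one event. *)
Inductive Event :=
| EInv (p : nat) (o : OpKind)
| ERes (p : nat) (r : Resp)
| EMaxWrite (p : nat) (v : nat)
| EMaxRead (p : nat) (r : Z).

Definition upd (f : nat -> LState) (p : nat) (s : LState) : nat -> LState :=
  fun q => if Nat.eqb q p then s else f q.

(** One step of process p.  The OpKind argument is the operation that the
    environment asks p to invoke; it is only used when p is idle. *)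
Definition step (k : R) (c : Config) (a : nat * OpKind) : Config * Event :=
  let (p, o) := a in
  let s := loc c p in
  let setp s' := mkC (upd (loc c) p s') (reg c) in
  match pc s with
  | Idle =>
      match o with
      | OInc =>
          let lc := S (lcounter s) in
          if Nat.eqb lc (threshold s)
          then (setp (mkL lc (threshold s) (nextVal s) (IncWrite (nextVal s))), EInv p OInc)
          else (setp (mkL lc (threshold s) (nextVal s) IncRet), EInv p OInc)
      | ORead =>
          (setp (mkL (lcounter s) (threshold s) (nextVal s) ReadRead), EInv p ORead)
      end
  | IncWrite v =>
      let nv := S (nextVal s) in
      let thr := if Nat.leb 2 nv then 2 * threshold s else threshold s in
      (mkC (upd (loc c) p (mkL 0 thr nv IncRet)) (Z.max (reg c) (Z.of_nat v)),
       EMaxWrite p v)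
  | IncRet =>
      (setp (mkL (lcounter s) (threshold s) (nextVal s) Idle), ERes p RInc)
  | ReadRead =>
      let r := reg c in
      let x := if Z.leb 0 r then (k * 2 ^ Z.to_nat r)%R else 0%R in
      (setp (mkL (lcounter s) (threshold s) (nextVal s) (ReadRet x)), EMaxRead p r)
  | ReadRet x =>
      (setp (mkL (lcounter s) (threshold s) (nextVal s) Idle), ERes p (RRead x))
  end.

Fixpoint run_from (k : R) (c : Config) (sched : list (nat * OpKind))
  : Config * list Event :=
  match sched with
  | [] => (c, [])
  | a :: sch =>
      let (c', e) := step k c a in
      let (cf, es) := run_from k c' sch in (cf, e :: es)
  end.

Definition events (k : R) (sched : list (nat * OpKind)) : list Event :=
  snd (run_from k init_config sched).

(** A schedule only schedules the n processes 0, ..., n-1.  Crashes are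
    modelled by processes that stop being scheduled. *)
Definition valid_sched (n : nat) (sched : list (nat * OpKind)) : Prop :=
  forall a, In a sched -> fst a < n.

Definition is_inc_inv (e : Event) : bool :=
  match e with EInv _ OInc => true | _ => false end.

Definition num_incs (es : list Event) : nat := length (filter is_inc_inv es).

Definition hl_of (p : nat) (e : Event) : bool :=
  match e with
  | EInv q _ | ERes q _ => Nat.eqb q p
  | _ => false
  end.

(** The operation invoked at position i of es is complete, with response r
    at position j. *)
Definition response (es : list Event) (i j : nat) (r : Resp) : Prop :=
  exists p o, nth_error es i = Some (EInv p o) /\ i < j /\
    nth_error es j = Some (ERes p r) /\
    forall l e, i < l -> l < j -> nth_error es l = Some e -> hl_of p e = false.

(** Sequential specification of a k-multiplicative-accurate counter:
    v is the number of preceding Increments. *)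
Fixpoint legal_from (k : R) (v : nat) (s : list Resp) : Prop :=
  match s with
  | [] => True
  | RInc :: s' => legal_from k (S v) s'
  | RRead x :: s' => (INR v / k <= x <= k * INR v)%R /\ legal_from k v s'
  end.

Definition precedes {A} (L : list A) (x y : A) : Prop :=
  exists a b, nth_error L a = Some x /\ nth_error L b = Some y /\ a < b.

(** An operation
    is identified by the position of its invocation in es.  L is the
    linearization: it contains every complete operation (with its actual
    response) and possibly some pending operations (with a response chosen
    for them), totally ordered so that real-time order is respected and the
    sequence is legal. *)
Definition linearizable (k : R) (es : list Event) : Prop :=
  exists L : list (nat * Resp),
    NoDup (map fst L) /\
    (forall i r, In (i, r) L ->
       exists p, nth_error es i = Some (EInv p (kind_of r)) /\
       (forall j r', response es i j r' -> r' = r)) /\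
    (forall i j r, response es i j r -> In (i, r) L) /\
    (forall i1 r1 i2 r2 j1 r1', In (i1, r1) L -> In (i2, r2) L ->
       response es i1 j1 r1' -> j1 < i2 -> precedes L (i1, r1) (i2, r2)) /\
    legal_from k 0 (map snd L).

Definition prefix (sigma : nat -> nat * OpKind) (t : nat) : list (nat * OpKind) :=
  map sigma (seq 0 t).

Definition is_res_of (p : nat) (e : Event) : bool :=
  match e with ERes q _ => Nat.eqb q p | _ => false end.

(** Step complexity when each access to the max-register costs g steps
    (the max-register being implemented from read-write registers) and
    every other step of Algorithm A costs one step.  cost_from counts the
    cost of the steps of p up to and including its next response. *)
Fixpoint cost_from (g p : nat) (es : list Event) : nat :=
  match es with
  | [] => 0
  | e :: es' =>
      match e with
      | ERes q _ => if Nat.eqb q p then 1 else cost_from g p es'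
      | EInv q _ => if Nat.eqb q p then 1 + cost_from g p es' else cost_from g p es'
      | EMaxWrite q _ | EMaxRead q _ =>
          if Nat.eqb q p then g + cost_from g p es' else cost_from g p es'
      end
  end.

Definition op_cost (g : nat) (es : list Event) (i p : nat) : nat :=
  1 + cost_from g p (skipn (S i) es).

(* Main.v *)
Require Import Defs.
From Stdlib Require Import Reals List Arith ZArith Lia Lra.
Import ListNotations.

Lemma nth_app_old {A} (l : list A) x i : i < length l -> nth_error (l ++ [x]) i = nth_error l i.
Proof. intros; apply nth_error_app1; auto. Qed.

Lemma nth_app_new {A} (l : list A) x : nth_error (l ++ [x]) (length l) = Some x.
Proof. rewrite nth_error_app2 by lia. rewrite Nat.sub_diag. reflexivity. Qed.

Lemma nth_app_inv {A} (l : list A) x i y : nth_error (l ++ [x]) i = Some y ->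
  (i < length l /\ nth_error l i = Some y) \/ (i = length l /\ y = x).
Proof.
  intros H. destruct (Nat.lt_ge_cases i (length l)).
  - left; split; auto. rewrite nth_error_app1 in H; auto.
  - right. rewrite nth_error_app2 in H by auto. destruct (i - length l) eqn:E; simpl in H.
    + inversion H; split; auto; lia.
    + rewrite nth_error_nil in H; discriminate.
Qed.

Lemma nth_lt {A} (l : list A) i y : nth_error l i = Some y -> i < length l.
Proof. intros H. apply nth_error_Some. rewrite H; discriminate. Qed.

Lemma response_lt es i j r : response es i j r -> i < j /\ j < length es.
Proof. intros (p&o&H1&H2&H3&H4). split; auto. eapply nth_lt; eauto. Qed.

Lemma response_app_old es e i j r : response es i j r -> response (es ++ [e]) i j r.
Proof.
  intros H. destruct (response_lt _ _ _ _ H) as [Hij Hj].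
  destruct H as (p&o&H1&H2&H3&H4). exists p, o.
  rewrite !nth_app_old by lia. repeat split; auto.
  intros l e' Hl1 Hl2 He. rewrite nth_app_old in He by lia. eauto.
Qed.

Lemma response_app_back es e i j r : response (es ++ [e]) i j r -> j < length es -> response es i j r.
Proof.
  intros H Hj. destruct H as (p&o&H1&H2&H3&H4). exists p, o.
  rewrite !nth_app_old in * by lia. repeat split; auto.
  intros l e' Hl1 Hl2 He. apply (H4 l e'); auto. rewrite nth_app_old by lia; auto.
Qed.

Lemma response_app_noRes es e i j r : (forall q r, e <> ERes q r) ->
  response (es ++ [e]) i j r -> response es i j r.
Proof.
  intros He H. pose proof (response_lt _ _ _ _ H) as [_ Hj].
  rewrite length_app in Hj; simpl in Hj.
  destruct (Nat.eq_dec j (length es)).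
  - subst. destruct H as (p&o&H1&H2&H3&H4). rewrite nth_app_new in H3.
    inversion H3; subst. exfalso; eapply He; eauto.
  - apply response_app_back with e; auto; lia.
Qed.

Definition nohl (es : list Event) (p i : nat) : Prop :=
  forall l e, i < l -> nth_error es l = Some e -> hl_of p e = false.

Lemma nohl_app es p i e : nohl es p i -> hl_of p e = false -> nohl (es ++ [e]) p i.
Proof.
  intros H He l e' Hl Hn. apply nth_app_inv in Hn as [[Hl' Hn]|[Hl' Hn]].
  - eauto.
  - subst; auto.
Qed.

Lemma response_new es p i0 o0 r i r' :
  nth_error es i0 = Some (EInv p o0) -> nohl es p i0 ->
  response (es ++ [ERes p r]) i (length es) r' -> i = i0 /\ r' = r.
Proof.
  intros Hi0 Hno (q&o&H1&H2&H3&H4).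
  rewrite nth_app_new in H3. inversion H3; subst q r'.
  rewrite nth_app_old in H1 by lia.
  split; auto.
  destruct (Nat.lt_total i i0) as [Hlt|[Heq|Hgt]]; auto.
  - exfalso. assert (hl_of p (EInv p o0) = false).
    { apply (H4 i0); auto. apply nth_lt in Hi0; auto. rewrite nth_app_old; auto. apply nth_lt in Hi0; auto. }
    simpl in H. rewrite Nat.eqb_refl in H. discriminate.
  - exfalso. specialize (Hno i _ Hgt H1). simpl in Hno. rewrite Nat.eqb_refl in Hno. discriminate.
Qed.

Definition w (g p : nat) (e : Event) : nat :=
  match e with
  | ERes q _ | EInv q _ => if Nat.eqb q p then 1 else 0
  | EMaxWrite q _ | EMaxRead q _ => if Nat.eqb q p then g else 0
  end.

Lemma cost_app g p l e : cost_from g p (l ++ [e]) =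
  if existsb (is_res_of p) l then cost_from g p l else cost_from g p l + w g p e.
Proof.
  induction l as [|x l IH]; simpl.
  - destruct e; simpl; destruct (Nat.eqb p0 p); lia.
  - destruct x; simpl; destruct (Nat.eqb p0 p); rewrite ?IH; destruct (existsb (is_res_of p) l); simpl; lia.
Qed.

Lemma skipn_app1 {A} (l : list A) x n : n <= length l -> skipn n (l ++ [x]) = skipn n l ++ [x].
Proof. intros H. rewrite skipn_app. replace (n - length l) with 0 by lia. reflexivity. Qed.

Lemma existsb_nohl es p i : nohl es p i -> existsb (is_res_of p) (skipn (S i) es) = false.
Proof.
  intros H. destruct (existsb (is_res_of p) (skipn (S i) es)) eqn:Hx; auto. exfalso. apply existsb_exists in Hx as [x [Hin Hx]].
  apply In_nth_error in Hin as [m Hm]. rewrite nth_error_skipn in Hm.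
  specialize (H (S i + m) x ltac:(lia) Hm). destruct x; simpl in *; congruence.
Qed.

Lemma existsb_resp es i j r q o : response es i j r -> nth_error es i = Some (EInv q o) ->
  existsb (is_res_of q) (skipn (S i) es) = true.
Proof.
  intros (q'&o'&H1&H2&H3&H4) Hi. rewrite Hi in H1; inversion H1; subst q' o'.
  apply existsb_exists. exists (ERes q r). split.
  - apply nth_error_In with (j - S i). rewrite nth_error_skipn. replace (S i + (j - S i)) with j by lia. auto.
  - simpl. apply Nat.eqb_refl.
Qed.

Lemma cost_done g es e i j r q o : response es i j r -> nth_error es i = Some (EInv q o) ->
  cost_from g q (skipn (S i) (es ++ [e])) = cost_from g q (skipn (S i) es).
Proof.
  intros H Hi. pose proof (response_lt _ _ _ _ H).
  rewrite skipn_app1 by lia. rewrite cost_app. erewrite existsb_resp; eauto.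
Qed.

Lemma cost_pend g es e i q : nohl es q i -> i < length es ->
  cost_from g q (skipn (S i) (es ++ [e])) = cost_from g q (skipn (S i) es) + w g q e.
Proof.
  intros H Hi. rewrite skipn_app1 by lia. rewrite cost_app. rewrite existsb_nohl; auto.
Qed.

Fixpoint sumN (n : nat) (f : nat -> nat) : nat :=
  match n with 0 => 0 | S n' => sumN n' f + f n' end.

Lemma sumN_ext n f g : (forall q, q < n -> f q = g q) -> sumN n f = sumN n g.
Proof. induction n; simpl; intros; auto. rewrite IHn by auto. rewrite H by lia. auto. Qed.

Lemma sumN_upd n f g p : p < n -> (forall q, q <> p -> f q = g q) -> sumN n f + g p = sumN n g + f p.
Proof.
  induction n; simpl; intros Hp H; [lia|].
  destruct (Nat.eq_dec p n).
  - subst. rewrite (sumN_ext n f g); [lia|]. intros; apply H; lia.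
  - rewrite (H n) by auto. specialize (IHn ltac:(lia) H). lia.
Qed.

Lemma sumN_ge n f p : p < n -> f p <= sumN n f.
Proof. induction n; simpl; intros; [lia|]. destruct (Nat.eq_dec p n); subst; [lia|]. specialize (IHn ltac:(lia)); lia. Qed.

Lemma sumN_le n f b : (forall q, q < n -> f q <= b) -> sumN n f <= n * b.
Proof. induction n; simpl; intros; [lia|]. specialize (IHn ltac:(auto)). specialize (H n ltac:(lia)). lia. Qed.

Lemma sumN_zero n f : (forall q, q < n -> f q = 0) -> sumN n f = 0.
Proof. induction n; simpl; intros; auto. rewrite IHn by auto. rewrite H; lia. Qed.

Definition cnt (s : LState) : nat :=
  match nextVal s with 0 => lcounter s | S j => 2 ^ j + lcounter s end.
Definition lin (s : LState) : nat :=
  match pc s with IncWrite _ => cnt s - 1 | _ => cnt s end.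
Definition LI (s : LState) : Prop :=
  threshold s = (match nextVal s with 0 => 1 | S j => 2 ^ j end) /\
  match pc s with
  | IncWrite v => v = nextVal s /\ lcounter s = threshold s
  | _ => lcounter s < threshold s
  end.

Lemma pow_pos2 j : 1 <= 2 ^ j.
Proof. induction j; simpl; lia. Qed.

Lemma lin_le s : LI s -> lin s <= 2 ^ nextVal s.
Proof.
  destruct s as [lc thr nv pcs]; unfold LI, lin, cnt; simpl; intros [H1 H2].
  destruct nv; simpl in *; destruct pcs; try lia.
Qed.

Lemma lin_ge s j : LI s -> nextVal s = S j -> 2 ^ j <= lin s.
Proof.
  destruct s as [lc thr nv pcs]; unfold LI, lin, cnt; simpl; intros [H1 H2] E; subst.
  pose proof (pow_pos2 j). destruct pcs; lia.
Qed.

Lemma lin_zero s : LI s -> nextVal s = 0 -> lin s = 0.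
Proof.
  destruct s as [lc thr nv pcs]; unfold LI, lin, cnt; simpl; intros [H1 H2] E; subst.
  destruct pcs; lia.
Qed.

Fixpoint cinc (l : list Resp) : nat :=
  match l with [] => 0 | RInc :: l' => S (cinc l') | _ :: l' => cinc l' end.

Lemma cinc_app l r : cinc (l ++ [r]) = cinc l + (match r with RInc => 1 | _ => 0 end).
Proof. induction l as [|x l IH]; simpl; [destruct r; auto|]. destruct x; simpl; rewrite IH; lia. Qed.

Lemma legal_app k v l r : legal_from k v l ->
  (match r with RInc => True | RRead x => (INR (v + cinc l) / k <= x <= k * INR (v + cinc l))%R end) ->
  legal_from k v (l ++ [r]).
Proof.
  revert v; induction l as [|x l IH]; simpl; intros v Hl Hr.
  - destruct r; simpl; auto. rewrite Nat.add_0_r in Hr; auto.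
  - destruct x.
    + apply IH; auto. destruct r; auto. replace (S v + cinc l) with (v + S (cinc l)) by lia; auto.
    + destruct Hl; split; auto.
Qed.

Definition kpc (x : PC) : OpKind :=
  match x with IncWrite _ | IncRet | Idle => OInc | _ => ORead end.
Definition memb (x : PC) (L : list (nat * Resp)) (i : nat) : Prop :=
  match x with
  | Idle => True
  | IncWrite _ | ReadRead => ~ In i (map fst L)
  | IncRet => In (i, RInc) L
  | ReadRet y => In (i, RRead y) L
  end.
Definition rem (g : nat) (x : PC) : nat :=
  match x with Idle => 0 | IncWrite _ | ReadRead => S g | _ => 1 end.
Definition RT (es : list Event) (L : list (nat * Resp)) : Prop :=
  forall i1 r1 i2 r2 j1 r1', In (i1,r1) L -> In (i2,r2) L ->
    response es i1 j1 r1' -> j1 < i2 -> precedes L (i1,r1) (i2,r2).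

Definition PEND (es : list Event) (L : list (nat * Resp)) (cq p : nat) (x : PC) : Prop :=
  cq < length es /\ nth_error es cq = Some (EInv p (kpc x)) /\ nohl es p cq /\ memb x L cq.
Definition COST (g : nat) (es : list Event) (i q cq : nat) (x : PC) : Prop :=
  ((exists j r, response es i j r) /\ cost_from g q (skipn (S i) es) <= S g) \/
  (i = cq /\ x <> Idle /\ cost_from g q (skipn (S i) es) + rem g x <= S g).

Record INV (n : nat) (k : R) (g : nat) (c : Config) (es : list Event)
  (L : list (nat * Resp)) (cur : nat -> nat) : Prop := {
 i_LI : forall q, LI (loc c q);
 i_out : forall q, n <= q -> loc c q = init_local;
 i_reg1 : (-1 <= reg c)%Z;
 i_reg2 : forall q, (Z.of_nat (nextVal (loc c q)) <= reg c + 1)%Z;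
 i_reg3 : (0 <= reg c)%Z -> exists q, q < n /\ Z.of_nat (nextVal (loc c q)) = (reg c + 1)%Z;
 i_cnt : num_incs es = sumN n (fun q => cnt (loc c q));
 i_lin : cinc (map snd L) = sumN n (fun q => lin (loc c q));
 i_mw : forall p v, In (EMaxWrite p v) es -> 2 ^ v <= num_incs es;
 i_nodup : NoDup (map fst L);
 i_L : forall i r, In (i,r) L -> i < length es /\
     (exists p, nth_error es i = Some (EInv p (kind_of r))) /\
     (forall j r', response es i j r' -> r' = r);
 i_rt : RT es L;
 i_legal : legal_from k 0 (map snd L);
 i_pend : forall p, pc (loc c p) <> Idle -> PEND es L (cur p) p (pc (loc c p));
 i_cost : forall i p o, nth_error es i = Some (EInv p o) -> COST g es i p (cur p) (pc (loc c p));
 i_comp : forall i j r, response es i j r -> In (i, r) L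
}.

Lemma run_from_app k c s a : run_from k c (s ++ [a]) =
  (fst (step k (fst (run_from k c s)) a), snd (run_from k c s) ++ [snd (step k (fst (run_from k c s)) a)]).
Proof.
  revert c; induction s as [|b s IH]; intros c; simpl.
  - destruct (step k c a); reflexivity.
  - destruct (step k c b) as [c1 e1]. rewrite IH. destruct (run_from k c1 s); reflexivity.
Qed.

Lemma INV_init n k g : INV n k g init_config [] [] (fun _ => 0).
Proof.
  constructor; simpl; intros; try tauto.
  - unfold LI; simpl; lia.
  - lia.
  - lia.
  - lia.
  - rewrite sumN_zero; auto.
  - rewrite sumN_zero; auto.
  - constructor.
  - intros i1 r1 i2 r2 j1 r1' H; destruct H.
  - rewrite nth_error_nil in H; discriminate.
  - apply response_lt in H; simpl in H; lia.
Qed.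

Lemma NoDup_fst_eq (L : list (nat * Resp)) i a b : NoDup (map fst L) -> In (i,a) L -> In (i,b) L -> a = b.
Proof.
  induction L as [|x L IH]; simpl; intros Hn Ha Hb; [tauto|].
  inversion Hn as [|y l Hy Hl]; subst.
  destruct Ha as [Ha|Ha]; destruct Hb as [Hb|Hb].
  - rewrite Ha in Hb; inversion Hb; auto.
  - exfalso; apply Hy; rewrite Ha; exact (in_map fst L (i,b) Hb).
  - exfalso; apply Hy; rewrite Hb; exact (in_map fst L (i,a) Ha).
  - eapply IH; eauto.
Qed.

Lemma In_nth_app {A} (L : list A) x y : In y L -> exists a, nth_error (L ++ [x]) a = Some y /\ a < length L.
Proof.
  intros H. apply In_nth_error in H as [a Ha]. exists a. pose proof (nth_lt _ _ _ Ha).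
  rewrite nth_app_old; auto.
Qed.

Lemma RT_app es e L x :
  RT es L -> (forall j r, ~ response (es ++ [e]) (fst x) j r) ->
  (forall i j r, response (es ++ [e]) i j r -> j < length es) ->
  RT (es ++ [e]) (L ++ [x]).
Proof.
  intros H Hx Hj i1 r1 i2 r2 j1 r1' H1 H2 Hr Hlt.
  pose proof (Hj _ _ _ Hr) as Hj1.
  apply in_app_or in H1; apply in_app_or in H2.
  destruct H1 as [H1|[H1|[]]].
  2:{ subst x. exfalso; eapply Hx; eauto. }
  destruct H2 as [H2|[H2|[]]].
  - destruct (H _ _ _ _ _ _ H1 H2 (response_app_back _ _ _ _ _ Hr Hj1) Hlt) as (a&b&Ha&Hb&Hab).
    exists a, b. pose proof (nth_lt _ _ _ Ha); pose proof (nth_lt _ _ _ Hb).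
    rewrite !nth_app_old; auto.
  - subst x. destruct (In_nth_app L (i2,r2) _ H1) as (a&Ha&Hal).
    exists a, (length L). rewrite nth_app_new. auto.
Qed.

Lemma RT_same es e L :
  RT es L -> (forall i j r, response (es ++ [e]) i j r -> j < length es) -> RT (es ++ [e]) L.
Proof.
  intros H Hj i1 r1 i2 r2 j1 r1' H1 H2 Hr Hlt.
  eapply H; eauto. apply response_app_back with e; eauto.
Qed.

Lemma upd_eq f p s : upd f p s p = s.
Proof. unfold upd; rewrite Nat.eqb_refl; auto. Qed.
Lemma upd_neq f p s q : q <> p -> upd f p s q = f q.
Proof. unfold upd; intros H; apply Nat.eqb_neq in H; rewrite H; auto. Qed.

Definition updc (cur : nat -> nat) p v : nat -> nat := fun q => if Nat.eqb q p then v else cur q.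
Lemma updc_eq cur p v : updc cur p v p = v.
Proof. unfold updc; rewrite Nat.eqb_refl; auto. Qed.
Lemma updc_neq cur p v q : q <> p -> updc cur p v q = cur q.
Proof. unfold updc; intros H; apply Nat.eqb_neq in H; rewrite H; auto. Qed.

Lemma num_incs_app es e : num_incs (es ++ [e]) = num_incs es + (if is_inc_inv e then 1 else 0).
Proof. unfold num_incs. rewrite filter_app, length_app. simpl. destruct (is_inc_inv e); simpl; lia. Qed.

Definition LPROP (es : list Event) (L : list (nat * Resp)) : Prop :=
  forall i r, In (i,r) L -> i < length es /\
     (exists p, nth_error es i = Some (EInv p (kind_of r))) /\
     (forall j r', response es i j r' -> r' = r).

Lemma LPROP_same es L e : LPROP es L -> (forall q r, e <> ERes q r) -> LPROP (es ++ [e]) L.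
Proof.
  intros H He i r Hin. destruct (H i r Hin) as (H1&[p H2]&H3). repeat split.
  - rewrite length_app; simpl; lia.
  - exists p. rewrite nth_app_old; auto.
  - intros j r' Hr. eapply H3. eapply response_app_noRes; eauto.
Qed.

Lemma LPROP_app es L e i r : LPROP es L -> (forall q r, e <> ERes q r) ->
  i < length (es ++ [e]) -> (exists p, nth_error (es ++ [e]) i = Some (EInv p (kind_of r))) ->
  (forall j r', ~ response (es ++ [e]) i j r') ->
  LPROP (es ++ [e]) (L ++ [(i,r)]).
Proof.
  intros H He Hi Hn Hr i' r' Hin. apply in_app_or in Hin as [Hin|[Hin|[]]].
  - eapply LPROP_same; eauto.
  - inversion Hin; subst. repeat split; auto. intros j r2 Hr2. exfalso; eapply Hr; eauto.
Qed.

Lemma resp_noRes_lt es e : (forall q r, e <> ERes q r) ->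
  forall i j r, response (es ++ [e]) i j r -> j < length es.
Proof. intros He i j r H. apply response_app_noRes in H; auto. apply response_lt in H; lia. Qed.

Lemma memb_app x L cq j r : memb x L cq -> cq <> j -> memb x (L ++ [(j,r)]) cq.
Proof.
  destruct x; simpl; intros H Hne; auto; try (apply in_or_app; auto).
  all: rewrite map_app, in_app_iff; simpl; intros [Hin|[Hin|[]]]; auto.
Qed.

Lemma PEND_frame es L L' e cq q x : PEND es L cq q x -> hl_of q e = false ->
  (memb x L cq -> memb x L' cq) -> PEND (es ++ [e]) L' cq q x.
Proof.
  intros (H1&H2&H3&H4) He Hm. repeat split; auto.
  - rewrite length_app; simpl; lia.
  - rewrite nth_app_old; auto.
  - apply nohl_app; auto.
Qed.

Lemma PEND_new es L' p x : memb x L' (length es) ->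
  PEND (es ++ [EInv p (kpc x)]) L' (length es) p x.
Proof.
  intros Hm. repeat split; auto.
  - rewrite length_app; simpl; lia.
  - apply nth_app_new.
  - intros l e Hl Hn. apply nth_lt in Hn. rewrite length_app in Hn; simpl in Hn; lia.
Qed.

Lemma COST_frame g es e i q cq x o : nth_error es i = Some (EInv q o) -> w g q e = 0 ->
  (x <> Idle -> nohl es q cq /\ cq < length es) -> COST g es i q cq x -> COST g (es ++ [e]) i q cq x.
Proof.
  intros Hi Hw Hp [[[j [r Hr]] Hc]|(Heq&Hx&Hc)].
  - left. split. exists j, r; apply response_app_old; auto. erewrite cost_done; eauto.
  - right. subst. destruct (Hp Hx). repeat split; auto. rewrite cost_pend; auto. lia.
Qed.

Lemma COST_done g es e i q cq' x' o : nth_error es i = Some (EInv q o) ->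
  ((exists j r, response es i j r) /\ cost_from g q (skipn (S i) es) <= S g) ->
  COST g (es ++ [e]) i q cq' x'.
Proof.
  intros Hi [[j [r Hr]] Hc]. left. split. exists j, r; apply response_app_old; auto. erewrite cost_done; eauto.
Qed.

Lemma w_other g p q e : q <> p -> (match e with EInv a _ | ERes a _ | EMaxWrite a _ | EMaxRead a _ => a = p end) -> w g q e = 0.
Proof. intros H He. destruct e; simpl; subst; apply Nat.eqb_neq in H; rewrite Nat.eqb_sym, H; auto. Qed.

Lemma hl_other p q e : q <> p -> (match e with EInv a _ | ERes a _ | EMaxWrite a _ | EMaxRead a _ => a = p end) -> hl_of q e = false.
Proof. intros H He. destruct e; simpl; subst; auto; apply Nat.eqb_neq in H; rewrite Nat.eqb_sym, H; auto. Qed.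

Lemma L_lt es L i : LPROP es L -> In i (map fst L) -> i < length es.
Proof. intros H Hin. apply in_map_iff in Hin as [[i' r] [Hi Hin]]. simpl in Hi; subst. apply (H _ _ Hin). Qed.

Arguments upd : simpl never.
Arguments updc : simpl never.

Ltac dI I := destruct I as [ILI Iout Ireg1 Ireg2 Ireg3 Icnt Ilin Imw Inodup IL Irt Ilegal Ipend Icost Icomp].

Lemma case_incw n k g c es L cur p lc thr nv :
  INV n k g c es L cur -> p < n -> loc c p = mkL lc thr nv Idle -> S lc = thr ->
  INV n k g (mkC (upd (loc c) p (mkL (S lc) thr nv (IncWrite nv))) (reg c))
    (es ++ [EInv p OInc]) L (updc cur p (length es)).
Proof.
  intros I Hp Hs Hl. dI I.
  set (s' := mkL (S lc) thr nv (IncWrite nv)).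
  assert (Hnv : forall q, nextVal (upd (loc c) p s' q) = nextVal (loc c q)).
  { intros q; destruct (Nat.eq_dec q p); [subst; rewrite upd_eq, Hs; auto | rewrite upd_neq; auto]. }
  assert (HLp := ILI p). rewrite Hs in HLp. unfold LI in HLp; simpl in HLp.
  assert (Hidle : pc (loc c p) = Idle) by (rewrite Hs; auto).
  constructor; cbn [loc reg].
  - intros q; destruct (Nat.eq_dec q p); [subst; rewrite upd_eq; unfold LI; simpl; destruct HLp; split; auto | rewrite upd_neq; auto].
  - intros q Hq; rewrite upd_neq by lia; auto.
  - auto.
  - intros q; rewrite Hnv; auto.
  - intros H; destruct (Ireg3 H) as [q [? ?]]; exists q; rewrite Hnv; auto.
  - rewrite num_incs_app; simpl. rewrite Icnt.
    assert (E := sumN_upd n (fun q => cnt (loc c q)) (fun q => cnt (upd (loc c) p s' q)) p Hp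
       ltac:(intros q Hq; cbv beta; rewrite upd_neq; auto)).
    simpl in E. rewrite upd_eq, Hs in E.
    assert (cnt s' = cnt (mkL lc thr nv Idle) + 1) by (unfold cnt; simpl; destruct nv; lia).
    lia.
  - rewrite Ilin. apply sumN_ext. intros q _. destruct (Nat.eq_dec q p).
    + subst; rewrite upd_eq, Hs; unfold lin, cnt; simpl; destruct nv; lia.
    + rewrite upd_neq; auto.
  - intros p0 v Hin. apply in_app_or in Hin as [Hin|[Hin|[]]]; [|discriminate].
    rewrite num_incs_app; specialize (Imw _ _ Hin); lia.
  - auto.
  - apply LPROP_same; auto; intros; discriminate.
  - apply RT_same; auto. apply resp_noRes_lt; intros; discriminate.
  - auto.
  - intros q Hq. destruct (Nat.eq_dec q p).
    + subst. rewrite upd_eq, updc_eq. apply (PEND_new es L p (IncWrite nv)). simpl.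
      intro Hin. apply L_lt with (es:=es) in Hin; auto. lia.
    + rewrite upd_neq in * by auto. rewrite updc_neq by auto. apply PEND_frame with (L:=L); auto.
      apply hl_other with p; auto.
  - intros i q o Hn. apply nth_app_inv in Hn as [[Hi Hn]|[Hi Hn]].
    + destruct (Nat.eq_dec q p).
      * subst q. destruct (Icost _ _ _ Hn) as [Hc|(_&Hx&_)]. eapply COST_done; eauto. rewrite Hidle in Hx; congruence.
      * rewrite upd_neq, updc_neq by auto. apply COST_frame with o; auto. apply w_other with p; auto.
        intros Hx; destruct (Ipend q Hx) as (?&?&?&?); auto.
        apply (Icost _ _ _ Hn).
    + injection Hn as -> ->. subst i. right. rewrite upd_eq, updc_eq. split; auto. split. simpl; discriminate.
      rewrite skipn_all2. simpl. lia. rewrite length_app; simpl; lia.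
  - intros i0 j0 r0 H0; apply Icomp with j0; eapply response_app_noRes; eauto; intros; discriminate.
Qed.

Lemma NoDup_snoc (L : list (nat * Resp)) i r : NoDup (map fst L) -> ~ In i (map fst L) -> NoDup (map fst (L ++ [(i,r)])).
Proof.
  intros H1 H2. rewrite map_app. simpl. apply NoDup_app; auto. repeat constructor; auto.
  intros a Ha [Hb|[]]; subst; auto.
Qed.

Lemma noresp_new es e j r : ~ response (es ++ [e]) (length es) j r.
Proof. intros H. apply response_lt in H. rewrite length_app in H; simpl in H; lia. Qed.

Lemma case_incr n k g c es L cur p lc thr nv :
  INV n k g c es L cur -> p < n -> loc c p = mkL lc thr nv Idle -> S lc <> thr ->
  INV n k g (mkC (upd (loc c) p (mkL (S lc) thr nv IncRet)) (reg c))
    (es ++ [EInv p OInc]) (L ++ [(length es, RInc)]) (updc cur p (length es)).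
Proof.
  intros I Hp Hs Hl. dI I.
  set (s' := mkL (S lc) thr nv IncRet).
  assert (Hnv : forall q, nextVal (upd (loc c) p s' q) = nextVal (loc c q)).
  { intros q; destruct (Nat.eq_dec q p); [subst; rewrite upd_eq, Hs; auto | rewrite upd_neq; auto]. }
  assert (HLp := ILI p). rewrite Hs in HLp. unfold LI in HLp; simpl in HLp.
  assert (Hidle : pc (loc c p) = Idle) by (rewrite Hs; auto).
  assert (HnL : ~ In (length es) (map fst L)).
  { intro Hin. apply L_lt with (es:=es) in Hin; auto. lia. }
  constructor; cbn [loc reg].
  - intros q; destruct (Nat.eq_dec q p); [subst; rewrite upd_eq; unfold LI; simpl; destruct HLp; split; auto; lia | rewrite upd_neq; auto].
  - intros q Hq; rewrite upd_neq by lia; auto.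
  - auto.
  - intros q; rewrite Hnv; auto.
  - intros H; destruct (Ireg3 H) as [q [? ?]]; exists q; rewrite Hnv; auto.
  - rewrite num_incs_app; simpl. rewrite Icnt.
    assert (E := sumN_upd n (fun q => cnt (loc c q)) (fun q => cnt (upd (loc c) p s' q)) p Hp
       ltac:(intros q Hq; cbv beta; rewrite upd_neq; auto)).
    simpl in E. rewrite upd_eq, Hs in E.
    assert (cnt s' = cnt (mkL lc thr nv Idle) + 1) by (unfold cnt; simpl; destruct nv; lia).
    lia.
  - rewrite map_app; cbn [map snd]; rewrite cinc_app, Ilin.
    assert (E := sumN_upd n (fun q => lin (loc c q)) (fun q => lin (upd (loc c) p s' q)) p Hp
       ltac:(intros q Hq; cbv beta; rewrite upd_neq; auto)).
    simpl in E. rewrite upd_eq, Hs in E.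
    assert (lin s' = lin (mkL lc thr nv Idle) + 1) by (unfold lin, cnt; simpl; destruct nv; lia).
    lia.
  - intros p0 v Hin. apply in_app_or in Hin as [Hin|[Hin|[]]]; [|discriminate].
    rewrite num_incs_app; specialize (Imw _ _ Hin); lia.
  - apply NoDup_snoc; auto.
  - apply LPROP_app; auto.
    + intros; discriminate.
    + rewrite length_app; simpl; lia.
    + exists p. apply nth_app_new.
    + intros j r'; apply noresp_new.
  - apply RT_app; auto.
    + intros j r'; apply noresp_new.
    + apply resp_noRes_lt; intros; discriminate.
  - rewrite map_app. apply legal_app; simpl; auto.
  - intros q Hq. destruct (Nat.eq_dec q p).
    + subst. rewrite upd_eq, updc_eq. apply (PEND_new es _ p IncRet). simpl.
      apply in_or_app; simpl; auto.
    + rewrite upd_neq in * by auto. rewrite updc_neq by auto. apply PEND_frame with (L:=L); auto.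
      apply hl_other with p; auto.
      intros Hm. apply memb_app; auto. destruct (Ipend q Hq) as (?&?&?&?); lia.
  - intros i q o Hn. apply nth_app_inv in Hn as [[Hi Hn]|[Hi Hn]].
    + destruct (Nat.eq_dec q p).
      * subst q. destruct (Icost _ _ _ Hn) as [Hc|(_&Hx&_)]. eapply COST_done; eauto. rewrite Hidle in Hx; congruence.
      * rewrite upd_neq, updc_neq by auto. apply COST_frame with o; auto. apply w_other with p; auto.
        intros Hx; destruct (Ipend q Hx) as (?&?&?&?); auto.
        apply (Icost _ _ _ Hn).
    + injection Hn as -> ->. subst i. right. rewrite upd_eq, updc_eq. split; auto. split. simpl; discriminate.
      rewrite skipn_all2. simpl. lia. rewrite length_app; simpl; lia.
  - intros i0 j0 r0 H0; apply in_or_app; left; apply Icomp with j0; eapply response_app_noRes; eauto; intros; discriminate.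
Qed.

Lemma case_read n k g c es L cur p lc thr nv :
  INV n k g c es L cur -> p < n -> loc c p = mkL lc thr nv Idle ->
  INV n k g (mkC (upd (loc c) p (mkL lc thr nv ReadRead)) (reg c))
    (es ++ [EInv p ORead]) L (updc cur p (length es)).
Proof.
  intros I Hp Hs. dI I.
  set (s' := mkL lc thr nv ReadRead).
  assert (Hnv : forall q, nextVal (upd (loc c) p s' q) = nextVal (loc c q)).
  { intros q; destruct (Nat.eq_dec q p); [subst; rewrite upd_eq, Hs; auto | rewrite upd_neq; auto]. }
  assert (HLp := ILI p). rewrite Hs in HLp. unfold LI in HLp; simpl in HLp.
  assert (Hidle : pc (loc c p) = Idle) by (rewrite Hs; auto).
  constructor; cbn [loc reg].
  - intros q; destruct (Nat.eq_dec q p); [subst; rewrite upd_eq; unfold LI; simpl; destruct HLp; split; auto | rewrite upd_neq; auto].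
  - intros q Hq; rewrite upd_neq by lia; auto.
  - auto.
  - intros q; rewrite Hnv; auto.
  - intros H; destruct (Ireg3 H) as [q [? ?]]; exists q; rewrite Hnv; auto.
  - rewrite num_incs_app; simpl. rewrite Icnt, Nat.add_0_r. apply sumN_ext. intros q _. destruct (Nat.eq_dec q p).
    + subst; rewrite upd_eq, Hs; reflexivity.
    + rewrite upd_neq; auto.
  - rewrite Ilin. apply sumN_ext. intros q _. destruct (Nat.eq_dec q p).
    + subst; rewrite upd_eq, Hs; reflexivity.
    + rewrite upd_neq; auto.
  - intros p0 v Hin. apply in_app_or in Hin as [Hin|[Hin|[]]]; [|discriminate].
    rewrite num_incs_app; specialize (Imw _ _ Hin); lia.
  - auto.
  - apply LPROP_same; auto; intros; discriminate.
  - apply RT_same; auto. apply resp_noRes_lt; intros; discriminate.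
  - auto.
  - intros q Hq. destruct (Nat.eq_dec q p).
    + subst. rewrite upd_eq, updc_eq. apply (PEND_new es L p ReadRead). simpl.
      intro Hin. apply L_lt with (es:=es) in Hin; auto. lia.
    + rewrite upd_neq in * by auto. rewrite updc_neq by auto. apply PEND_frame with (L:=L); auto.
      apply hl_other with p; auto.
  - intros i q o Hn. apply nth_app_inv in Hn as [[Hi Hn]|[Hi Hn]].
    + destruct (Nat.eq_dec q p).
      * subst q. destruct (Icost _ _ _ Hn) as [Hc|(_&Hx&_)]. eapply COST_done; eauto. rewrite Hidle in Hx; congruence.
      * rewrite upd_neq, updc_neq by auto. apply COST_frame with o; auto. apply w_other with p; auto.
        intros Hx; destruct (Ipend q Hx) as (?&?&?&?); auto.
        apply (Icost _ _ _ Hn).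
    + injection Hn as -> ->. subst i. right. rewrite upd_eq, updc_eq. split; auto. split. simpl; discriminate.
      rewrite skipn_all2. simpl. lia. rewrite length_app; simpl; lia.
  - intros i0 j0 r0 H0; apply Icomp with j0; eapply response_app_noRes; eauto; intros; discriminate.
Qed.

Lemma read_ok n k g c es L cur : INV n k g c es L cur -> (sqrt (2 * INR n) <= k)%R ->
  let V := cinc (map snd L) in
  let x := if Z.leb 0 (reg c) then (k * 2 ^ Z.to_nat (reg c))%R else 0%R in
  (INR V / k <= x <= k * INR V)%R.
Proof.
  intros I Hk V x. dI I. subst V x.
  destruct (Z.leb 0 (reg c)) eqn:Hr.
  - apply Z.leb_le in Hr. set (r := Z.to_nat (reg c)).
    destruct (Ireg3 Hr) as [w0 [Hw Hw2]].
    assert (Hnw : nextVal (loc c w0) = S r) by (subst r; lia).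
    assert (Hlo : 2 ^ r <= cinc (map snd L)).
    { rewrite Ilin. eapply Nat.le_trans. apply (lin_ge _ r (ILI w0) Hnw).
      apply (sumN_ge n (fun q => lin (loc c q)) w0 Hw). }
    assert (Hhi : cinc (map snd L) <= n * 2 ^ S r).
    { rewrite Ilin. apply sumN_le. intros q Hq. eapply Nat.le_trans. apply lin_le, ILI.
      apply Nat.pow_le_mono_r. lia. specialize (Ireg2 q). subst r; lia. }
    set (V := cinc (map snd L)) in *.
    assert (HP : INR (2 ^ r) = (2 ^ r)%R) by (rewrite pow_INR; replace (INR 2) with 2%R by (simpl; lra); reflexivity).
    apply le_INR in Hlo. apply le_INR in Hhi. rewrite HP in Hlo.
    rewrite mult_INR, pow_INR in Hhi. replace (INR 2) with 2%R in Hhi by (simpl; lra). rewrite <- tech_pow_Rmult in Hhi.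
    assert (Hn : (1 <= INR n)%R). { apply (le_INR 1); lia. }
    assert (Hs0 : (0 < sqrt (2 * INR n))%R) by (apply sqrt_lt_R0; lra).
    assert (Hss := sqrt_sqrt (2 * INR n) ltac:(lra)).
    assert (Hkk : (2 * INR n <= k * k)%R) by nra.
    assert (HPp : (0 < 2 ^ r)%R) by (apply pow_lt; lra).
    split.
    + assert (H : (INR V * / k <= k * k * 2 ^ r * / k)%R).
      { apply Rmult_le_compat_r. left; apply Rinv_0_lt_compat; lra. nra. }
      replace (k * k * 2 ^ r * / k)%R with (k * 2 ^ r)%R in H by (field; lra).
      unfold Rdiv; lra.
    + apply Rmult_le_compat_l; lra.
  - apply Z.leb_gt in Hr.
    assert (HV : cinc (map snd L) = 0).
    { rewrite Ilin. apply sumN_zero. intros q Hq. apply lin_zero. apply ILI. specialize (Ireg2 q). lia. }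
    rewrite HV. simpl. unfold Rdiv. rewrite Rmult_0_l, Rmult_0_r. lra.
Qed.

Lemma noresp_pend es i p o j r : nth_error es i = Some (EInv p o) -> nohl es p i -> ~ response es i j r.
Proof.
  intros Hi Hn (q&o'&H1&H2&H3&H4). rewrite Hi in H1. injection H1 as <- <-.
  specialize (Hn _ _ H2 H3). simpl in Hn. rewrite Nat.eqb_refl in Hn. discriminate.
Qed.

Lemma resp_complete es i p o r : nth_error es i = Some (EInv p o) -> nohl es p i -> i < length es ->
  response (es ++ [ERes p r]) i (length es) r.
Proof.
  intros Hi Hn Hl. exists p, o. rewrite nth_app_old by auto. rewrite nth_app_new. repeat split; auto.
  intros l e H1 H2 H3. rewrite nth_app_old in H3 by auto. eauto.
Qed.

Lemma RT_same2 es e L : RT es L -> LPROP es L -> RT (es ++ [e]) L.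
Proof.
  intros H HL i1 r1 i2 r2 j1 r1' H1 H2 Hr Hlt.
  pose proof (response_lt _ _ _ _ Hr) as [_ Hj]. rewrite length_app in Hj; simpl in Hj.
  destruct (Nat.eq_dec j1 (length es)).
  - subst. destruct (HL _ _ H2) as [Hi2 _]. lia.
  - apply (H i1 r1 i2 r2 j1 r1'); auto. apply response_app_back with e; auto. lia.
Qed.

Lemma LPROP_res es L p r i0 o0 : LPROP es L -> NoDup (map fst L) ->
  nth_error es i0 = Some (EInv p o0) -> nohl es p i0 -> In (i0, r) L ->
  LPROP (es ++ [ERes p r]) L.
Proof.
  intros H Hnd Hi0 Hno Hin i r1 Hin1. destruct (H _ _ Hin1) as (H1&[q H2]&H3). repeat split.
  - rewrite length_app; simpl; lia.
  - exists q. rewrite nth_app_old; auto.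
  - intros j r' Hr. pose proof (response_lt _ _ _ _ Hr) as [_ Hj]. rewrite length_app in Hj; simpl in Hj.
    destruct (Nat.eq_dec j (length es)).
    + subst. destruct (response_new _ _ _ _ _ _ _ Hi0 Hno Hr) as [-> ->].
      eapply NoDup_fst_eq; eauto.
    + apply H3 with j. apply response_app_back with (ERes p r); auto. lia.
Qed.

Lemma cur_neq es p q o1 o2 cp cq : nth_error es cp = Some (EInv p o1) -> nth_error es cq = Some (EInv q o2) ->
  q <> p -> cq <> cp.
Proof. intros H1 H2 Hne E. subst. rewrite H1 in H2. injection H2; auto. Qed.

Lemma case_write n k g c es L cur p lc thr nv v :
  INV n k g c es L cur -> p < n -> loc c p = mkL lc thr nv (IncWrite v) ->
  INV n k g (mkC (upd (loc c) p (mkL 0 (if Nat.leb 2 (S nv) then 2 * thr else thr) (S nv) IncRet))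
                 (Z.max (reg c) (Z.of_nat v)))
    (es ++ [EMaxWrite p v]) (L ++ [(cur p, RInc)]) cur.
Proof.
  intros I Hp Hs. dI I.
  set (s' := mkL 0 (if Nat.leb 2 (S nv) then 2 * thr else thr) (S nv) IncRet).
  assert (HLp := ILI p). rewrite Hs in HLp. unfold LI in HLp; simpl in HLp.
  destruct HLp as [Ht [Hv Hlc]]. subst v lc.
  assert (Hnp : pc (loc c p) <> Idle) by (rewrite Hs; discriminate).
  destruct (Ipend p Hnp) as (Pc1&Pc2&Pc3&Pc4). rewrite Hs in Pc2, Pc4. simpl in Pc2, Pc4.
  assert (Hcnt : cnt s' = cnt (mkL thr thr nv (IncWrite nv))).
  { unfold cnt; simpl. subst thr. destruct nv; simpl; lia. }
  assert (Hcnt1 : 1 <= cnt (mkL thr thr nv (IncWrite nv))).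
  { unfold cnt; simpl. subst thr. pose proof pow_pos2. destruct nv; simpl; try lia. specialize (H nv); lia. }
  constructor; cbn [loc reg].
  - intros q; destruct (Nat.eq_dec q p).
    + subst q; rewrite upd_eq; unfold LI; simpl. subst thr; destruct nv; simpl; split; auto; try lia.
      pose proof (pow_pos2 nv); lia.
    + rewrite upd_neq; auto.
  - intros q Hq; rewrite upd_neq by lia; auto.
  - lia.
  - intros q; destruct (Nat.eq_dec q p).
    + subst; rewrite upd_eq; simpl. lia.
    + rewrite upd_neq by auto. specialize (Ireg2 q); lia.
  - intros H. destruct (Z_lt_le_dec (reg c) (Z.of_nat nv)).
    + exists p; split; auto. rewrite upd_eq; simpl. lia.
    + destruct (Ireg3 ltac:(lia)) as [q [Hq Hq2]]. exists q; split; auto.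
      destruct (Nat.eq_dec q p).
      * subst. rewrite Hs in Hq2; simpl in Hq2. lia.
      * rewrite upd_neq by auto. lia.
  - rewrite num_incs_app; simpl. rewrite Icnt, Nat.add_0_r. apply sumN_ext. intros q _. destruct (Nat.eq_dec q p).
    + subst; rewrite upd_eq, Hs; auto.
    + rewrite upd_neq; auto.
  - rewrite map_app; cbn [map snd]; rewrite cinc_app, Ilin.
    assert (E := sumN_upd n (fun q => lin (loc c q)) (fun q => lin (upd (loc c) p s' q)) p Hp
       ltac:(intros q Hq; cbv beta; rewrite upd_neq; auto)).
    simpl in E. rewrite upd_eq, Hs in E.
    assert (lin s' = cnt s') by reflexivity.
    assert (lin (mkL thr thr nv (IncWrite nv)) = cnt (mkL thr thr nv (IncWrite nv)) - 1) by reflexivity.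
    lia.
  - intros p0 v Hin. rewrite num_incs_app; simpl. rewrite Nat.add_0_r.
    apply in_app_or in Hin as [Hin|[Hin|[]]]; [apply (Imw _ _ Hin)|].
    injection Hin as <- <-. rewrite Icnt. eapply Nat.le_trans.
    2: apply (sumN_ge n (fun q => cnt (loc c q)) p Hp). simpl. rewrite Hs.
    unfold cnt; simpl. subst thr. destruct nv; simpl; lia.
  - apply NoDup_snoc; auto.
  - apply LPROP_app; auto.
    + intros; discriminate.
    + rewrite length_app; simpl; lia.
    + exists p. rewrite nth_app_old; auto.
    + intros j r'. apply noresp_pend with p OInc. rewrite nth_app_old; auto. apply nohl_app; auto.
  - apply RT_app; auto.
    + intros j r'. apply noresp_pend with p OInc. rewrite nth_app_old; auto. apply nohl_app; auto.
    + apply resp_noRes_lt; intros; discriminate.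
  - rewrite map_app. apply legal_app; simpl; auto.
  - intros q Hq. destruct (Nat.eq_dec q p).
    + subst. rewrite upd_eq. simpl. repeat split.
      * rewrite length_app; simpl; lia.
      * rewrite nth_app_old; auto.
      * apply nohl_app; auto.
      * apply in_or_app; simpl; auto.
    + rewrite upd_neq in * by auto. apply PEND_frame with (L:=L); auto.
      intros Hm. apply memb_app; auto. destruct (Ipend q Hq) as (?&?&?&?).
      eapply cur_neq; eauto.
  - intros i q o Hn. apply nth_app_inv in Hn as [[Hi Hn]|[Hi Hn]]; [|discriminate].
    destruct (Nat.eq_dec q p).
    + subst q. destruct (Icost _ _ _ Hn) as [Hc|(Hic&Hx&Hc)]. eapply COST_done; eauto.
      right. subst i. rewrite upd_eq. split; auto. split. simpl; discriminate.
      rewrite cost_pend by auto. rewrite Hs in Hc. simpl in Hc |- *. rewrite Nat.eqb_refl. lia.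
    + rewrite upd_neq by auto. apply COST_frame with o; auto. apply w_other with p; auto.
      intros Hx; destruct (Ipend q Hx) as (?&?&?&?); auto.
      apply (Icost _ _ _ Hn).
  - intros i0 j0 r0 H0; apply in_or_app; left; apply Icomp with j0; eapply response_app_noRes; eauto; intros; discriminate.
Qed.

Lemma case_ret n k g c es L cur p lc thr nv x r :
  INV n k g c es L cur -> p < n -> loc c p = mkL lc thr nv x ->
  ((x = IncRet /\ r = RInc) \/ (exists y, x = ReadRet y /\ r = RRead y)) ->
  INV n k g (mkC (upd (loc c) p (mkL lc thr nv Idle)) (reg c))
    (es ++ [ERes p r]) L cur.
Proof.
  intros I Hp Hs Hx. dI I.
  set (s' := mkL lc thr nv Idle).
  assert (Hnv : forall q, nextVal (upd (loc c) p s' q) = nextVal (loc c q)).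
  { intros q; destruct (Nat.eq_dec q p); [subst; rewrite upd_eq, Hs; auto | rewrite upd_neq; auto]. }
  assert (HLp := ILI p). rewrite Hs in HLp. unfold LI in HLp; simpl in HLp.
  assert (Hnp : pc (loc c p) <> Idle) by (rewrite Hs; destruct Hx as [[-> _]|[y [-> _]]]; discriminate).
  destruct (Ipend p Hnp) as (Pc1&Pc2&Pc3&Pc4). rewrite Hs in Pc2, Pc4. simpl in Pc2, Pc4.
  assert (Hm : In (cur p, r) L) by (destruct Hx as [[-> ->]|[y [-> ->]]]; auto).
  assert (Hrem : rem g x = 1) by (destruct Hx as [[-> ->]|[y [-> ->]]]; auto).
  assert (HLI : lcounter (loc c p) < threshold (loc c p)) by (rewrite Hs; simpl; destruct Hx as [[-> ->]|[y [-> ->]]]; tauto).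
  rewrite Hs in HLI; simpl in HLI.
  assert (Hlin : lin s' = lin (mkL lc thr nv x)) by (unfold lin; simpl; destruct Hx as [[-> ->]|[y [-> ->]]]; auto).
  constructor; cbn [loc reg].
  - intros q; destruct (Nat.eq_dec q p); [subst; rewrite upd_eq; unfold LI; simpl; destruct HLp; split; auto | rewrite upd_neq; auto].
  - intros q Hq; rewrite upd_neq by lia; auto.
  - auto.
  - intros q; rewrite Hnv; auto.
  - intros H; destruct (Ireg3 H) as [q [? ?]]; exists q; rewrite Hnv; auto.
  - rewrite num_incs_app; simpl. rewrite Icnt, Nat.add_0_r. apply sumN_ext. intros q _. destruct (Nat.eq_dec q p).
    + subst; rewrite upd_eq, Hs; reflexivity.
    + rewrite upd_neq; auto.
  - rewrite Ilin. apply sumN_ext. intros q _. destruct (Nat.eq_dec q p).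
    + subst; rewrite upd_eq, Hs; auto.
    + rewrite upd_neq; auto.
  - intros p0 v Hin. apply in_app_or in Hin as [Hin|[Hin|[]]]; [|discriminate].
    rewrite num_incs_app; specialize (Imw _ _ Hin); lia.
  - auto.
  - eapply LPROP_res; eauto.
  - apply RT_same2; auto.
  - auto.
  - intros q Hq. destruct (Nat.eq_dec q p).
    + subst. rewrite upd_eq in Hq. simpl in Hq. congruence.
    + rewrite upd_neq in * by auto. apply PEND_frame with (L:=L); auto.
      apply hl_other with p; auto.
  - intros i q o Hn. apply nth_app_inv in Hn as [[Hi Hn]|[Hi Hn]]; [|discriminate].
    destruct (Nat.eq_dec q p).
    + subst q. destruct (Icost _ _ _ Hn) as [Hc|(Hic&Hx'&Hc)]. eapply COST_done; eauto.
      left. subst i. split.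
      * exists (length es), r. eapply resp_complete; eauto.
      * rewrite cost_pend by auto. rewrite Hs in Hc. simpl in Hc |- *. rewrite Nat.eqb_refl. lia.
    + rewrite upd_neq by auto. apply COST_frame with o; auto. apply w_other with p; auto.
      intros Hx'; destruct (Ipend q Hx') as (?&?&?&?); auto.
      apply (Icost _ _ _ Hn).
  - intros i0 j0 r0 H0. pose proof (response_lt _ _ _ _ H0) as [_ Hj]. rewrite length_app in Hj; simpl in Hj.
    destruct (Nat.eq_dec j0 (length es)).
    + subst j0. destruct (response_new _ _ _ _ _ _ _ Pc2 Pc3 H0) as [-> ->]; auto.
    + apply Icomp with j0. apply response_app_back with (ERes p r); auto. lia.
Qed.

Lemma case_rread n k g c es L cur p lc thr nv :
  INV n k g c es L cur -> p < n -> (sqrt (2 * INR n) <= k)%R -> loc c p = mkL lc thr nv ReadRead ->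
  INV n k g (mkC (upd (loc c) p (mkL lc thr nv
        (ReadRet (if Z.leb 0 (reg c) then (k * 2 ^ Z.to_nat (reg c))%R else 0%R)))) (reg c))
    (es ++ [EMaxRead p (reg c)])
    (L ++ [(cur p, RRead (if Z.leb 0 (reg c) then (k * 2 ^ Z.to_nat (reg c))%R else 0%R))]) cur.
Proof.
  intros I Hp Hk Hs. pose proof (read_ok _ _ _ _ _ _ _ I Hk) as Hread. simpl in Hread. dI I.
  set (xv := if Z.leb 0 (reg c) then (k * 2 ^ Z.to_nat (reg c))%R else 0%R) in *.
  set (s' := mkL lc thr nv (ReadRet xv)).
  assert (Hnv : forall q, nextVal (upd (loc c) p s' q) = nextVal (loc c q)).
  { intros q; destruct (Nat.eq_dec q p); [subst; rewrite upd_eq, Hs; auto | rewrite upd_neq; auto]. }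
  assert (HLp := ILI p). rewrite Hs in HLp. unfold LI in HLp; simpl in HLp.
  assert (Hnp : pc (loc c p) <> Idle) by (rewrite Hs; discriminate).
  destruct (Ipend p Hnp) as (Pc1&Pc2&Pc3&Pc4). rewrite Hs in Pc2, Pc4. simpl in Pc2, Pc4.
  constructor; cbn [loc reg].
  - intros q; destruct (Nat.eq_dec q p); [subst q; rewrite upd_eq; unfold LI; simpl; destruct HLp; split; auto | rewrite upd_neq; auto].
  - intros q Hq; rewrite upd_neq by lia; auto.
  - auto.
  - intros q; rewrite Hnv; auto.
  - intros H; destruct (Ireg3 H) as [q [? ?]]; exists q; rewrite Hnv; auto.
  - rewrite num_incs_app; simpl. rewrite Icnt, Nat.add_0_r. apply sumN_ext. intros q _. destruct (Nat.eq_dec q p).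
    + subst q; rewrite upd_eq, Hs; reflexivity.
    + rewrite upd_neq; auto.
  - rewrite map_app; cbn [map snd]; rewrite cinc_app, Ilin, Nat.add_0_r. apply sumN_ext. intros q _. destruct (Nat.eq_dec q p).
    + subst q; rewrite upd_eq, Hs; reflexivity.
    + rewrite upd_neq; auto.
  - intros p0 v Hin. apply in_app_or in Hin as [Hin|[Hin|[]]]; [|discriminate].
    rewrite num_incs_app; specialize (Imw _ _ Hin); lia.
  - apply NoDup_snoc; auto.
  - apply LPROP_app; auto.
    + intros; discriminate.
    + rewrite length_app; simpl; lia.
    + exists p. rewrite nth_app_old; auto.
    + intros j r'. apply noresp_pend with p ORead. rewrite nth_app_old; auto. apply nohl_app; auto.
  - apply RT_app; auto.
    + intros j r'. apply noresp_pend with p ORead. rewrite nth_app_old; auto. apply nohl_app; auto.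
    + apply resp_noRes_lt; intros; discriminate.
  - rewrite map_app. apply legal_app; simpl; auto.
  - intros q Hq. destruct (Nat.eq_dec q p).
    + subst q. rewrite upd_eq. simpl. repeat split.
      * rewrite length_app; simpl; lia.
      * rewrite nth_app_old; auto.
      * apply nohl_app; auto.
      * apply in_or_app; simpl; auto.
    + rewrite upd_neq in * by auto. apply PEND_frame with (L:=L); auto.
      intros Hm. apply memb_app; auto. destruct (Ipend q Hq) as (?&?&?&?).
      eapply cur_neq; eauto.
  - intros i q o Hn. apply nth_app_inv in Hn as [[Hi Hn]|[Hi Hn]]; [|discriminate].
    destruct (Nat.eq_dec q p).
    + subst q. destruct (Icost _ _ _ Hn) as [Hc|(Hic&Hx&Hc)]. eapply COST_done; eauto.
      right. subst i. rewrite upd_eq. split; auto. split. simpl; discriminate.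
      rewrite cost_pend by auto. rewrite Hs in Hc. simpl in Hc |- *. rewrite Nat.eqb_refl. lia.
    + rewrite upd_neq by auto. apply COST_frame with o; auto. apply w_other with p; auto.
      intros Hx; destruct (Ipend q Hx) as (?&?&?&?); auto.
      apply (Icost _ _ _ Hn).
  - intros i0 j0 r0 H0; apply in_or_app; left; apply Icomp with j0; eapply response_app_noRes; eauto; intros; discriminate.
Qed.

Lemma INV_step n k g c es L cur a : INV n k g c es L cur -> fst a < n -> (sqrt (2 * INR n) <= k)%R ->
  exists L' cur', INV n k g (fst (step k c a)) (es ++ [snd (step k c a)]) L' cur'.
Proof.
  intros I Hp Hk. destruct a as [p o]; simpl in Hp.
  destruct (loc c p) as [lc thr nv x] eqn:Hs.
  unfold step. rewrite Hs. cbn [pc lcounter threshold nextVal fst snd].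
  destruct x.
  - destruct o.
    + destruct (Nat.eqb (S lc) thr) eqn:E; cbn [fst snd].
      * apply Nat.eqb_eq in E. eexists _, _. eapply case_incw; eauto.
      * apply Nat.eqb_neq in E. eexists _, _. eapply case_incr; eauto.
    + cbn [fst snd]. eexists _, _. eapply case_read; eauto.
  - cbn [fst snd]. eexists _, _. eapply case_write; eauto.
  - cbn [fst snd]. eexists _, _. eapply case_ret; eauto.
  - cbn [fst snd]. eexists _, _. eapply case_rread; eauto.
  - cbn [fst snd]. eexists _, _. eapply case_ret; eauto.
Qed.

Lemma INV_reach n k g sched : valid_sched n sched -> (sqrt (2 * INR n) <= k)%R ->
  exists L cur, INV n k g (fst (run_from k init_config sched)) (events k sched) L cur.
Proof.
  intros Hv Hk. induction sched as [|a s IH] using rev_ind.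
  - exists [], (fun _ => 0). apply INV_init.
  - assert (Hv' : valid_sched n s) by (intros b Hb; apply Hv, in_or_app; auto).
    destruct (IH Hv') as (L & cur & I).
    unfold events. rewrite run_from_app. cbn [fst snd].
    apply INV_step with L cur; auto. apply Hv, in_or_app; simpl; auto.
Qed.

Definition pot (x : PC) : nat := match x with Idle => 3 | IncWrite _ | ReadRead => 2 | _ => 1 end.

Lemma step_pot k c q o p : is_res_of p (snd (step k c (q,o))) = true \/
  (pot (pc (loc (fst (step k c (q,o))) p)) <= pot (pc (loc c p)) /\
   (q = p -> pot (pc (loc (fst (step k c (q,o))) p)) < pot (pc (loc c p)))).
Proof.
  unfold step. destruct (loc c q) as [lc thr nv x] eqn:Hs.
  cbv zeta. cbn [pc lcounter threshold nextVal].
  destruct x; [destruct o; [destruct (Nat.eqb (S lc) thr)|]|..]; cbn [fst snd loc pc lcounter threshold nextVal];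
  (destruct (Nat.eq_dec q p);
   [subst q; rewrite ?upd_eq, Hs; simpl; try (left; apply Nat.eqb_refl); right; split; intros; lia
   | rewrite upd_neq by auto; right; split; intros; [lia | congruence]]).
Qed.

Lemma prefix_S (sigma : nat -> nat * OpKind) t : prefix sigma (S t) = prefix sigma t ++ [sigma t].
Proof. unfold prefix. rewrite seq_S, map_app. reflexivity. Qed.

Section WF.
Variable k : R.
Variable sigma : nat -> nat * OpKind.
Variable p : nat.
Definition cfg t := fst (run_from k init_config (prefix sigma t)).
Definition nres t := length (filter (is_res_of p) (events k (prefix sigma t))).
Definition P t := pot (pc (loc (cfg t) p)).

Lemma nres_S t : nres (S t) = nres t + (if is_res_of p (snd (step k (cfg t) (sigma t))) then 1 else 0).
Proof.
  unfold nres, events, cfg. rewrite prefix_S, run_from_app. cbn [snd]. rewrite filter_app, length_app.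
  cbn [filter]. destruct (is_res_of _ _); simpl; lia.
Qed.

Lemma cfg_S t : cfg (S t) = fst (step k (cfg t) (sigma t)).
Proof. unfold cfg. rewrite prefix_S, run_from_app. reflexivity. Qed.

Lemma one_step t : nres t < nres (S t) \/ (nres (S t) = nres t /\ P (S t) <= P t /\ (fst (sigma t) = p -> P (S t) < P t)).
Proof.
  rewrite nres_S. unfold P. rewrite cfg_S. destruct (sigma t) as [q o] eqn:E.
  destruct (step_pot k (cfg t) q o p) as [H|H].
  - left. rewrite H. lia.
  - destruct (is_res_of p _); [left; lia| right; simpl; split; [lia|exact H]].
Qed.

Lemma mono t d : nres t <= nres (t + d).
Proof.
  induction d; [rewrite Nat.add_0_r; lia|]. rewrite Nat.add_succ_r.
  destruct (one_step (t + d)); lia.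
Qed.

Lemma multi t d : nres t < nres (t + d) \/ P (t + d) <= P t.
Proof.
  induction d; [rewrite Nat.add_0_r; lia|]. rewrite Nat.add_succ_r.
  pose proof (mono t d). destruct (one_step (t + d)); lia.
Qed.

Lemma progress (Hinf : forall t, exists t', t <= t' /\ fst (sigma t') = p) :
  forall m t0, P t0 <= m -> exists t, nres t0 < nres t.
Proof.
  induction m; intros t0 Hm.
  - destruct (Hinf t0) as [t' [Ht' Hs]]. replace t' with (t0 + (t' - t0)) in Hs by lia.
    destruct (multi t0 (t' - t0)) as [H|H]; [eauto|].
    destruct (one_step (t0 + (t' - t0))) as [H2|(_&_&H2)].
    + exists (S (t0 + (t' - t0))). pose proof (mono t0 (t' - t0)); lia.
    + specialize (H2 Hs). lia.
  - destruct (Hinf t0) as [t' [Ht' Hs]]. replace t' with (t0 + (t' - t0)) in Hs by lia.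
    destruct (multi t0 (t' - t0)) as [H|H]; [eauto|].
    pose proof (mono t0 (t' - t0)).
    destruct (one_step (t0 + (t' - t0))) as [H2|(H3&_&H2)].
    + exists (S (t0 + (t' - t0))). lia.
    + specialize (H2 Hs). destruct (IHm (S (t0 + (t' - t0)))) as [t Ht]; [lia|].
      exists t. lia.
Qed.

Lemma waitfree (Hinf : forall t, exists t', t <= t' /\ fst (sigma t') = p) :
  forall N, exists t, N <= nres t.
Proof.
  induction N.
  - exists 0; lia.
  - destruct IHN as [t0 Ht0]. destruct (progress Hinf (P t0) t0 (le_n _)) as [t Ht].
    exists t; lia.
Qed.
End WF.

Lemma arith c m g : 4 <= m -> g <= c * Nat.log2 (Nat.log2_up m) ->
  1 + S g <= (2 * c + 2) * Nat.log2 (Nat.log2 m).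
Proof.
  intros Hm Hg.
  assert (Ha : 2 <= Nat.log2 m) by (apply Nat.log2_le_pow2; simpl; lia).
  set (a := Nat.log2 m) in *.
  assert (Hb : 1 <= Nat.log2 a) by (apply Nat.log2_le_pow2; simpl; lia).
  assert (H1 : Nat.log2_up m <= S a) by apply Nat.le_log2_up_succ_log2.
  assert (H2 : Nat.log2 (Nat.log2_up m) <= S (Nat.log2 a)).
  { rewrite <- Nat.log2_double by lia. apply Nat.log2_le_mono. lia. }
  assert (H3 : c * Nat.log2 (Nat.log2_up m) <= c * (2 * Nat.log2 a)) by (apply Nat.mul_le_mono_l; lia).
  nia.
Qed.

Theorem mainTheorem3 :
  (forall (n m : nat) (k : R), 1 <= m -> (sqrt (2 * INR n) <= k)%R ->
     (forall sched, valid_sched n sched -> num_incs (events k sched) <= m ->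
        forall p v, In (EMaxWrite p v) (events k sched) -> v <= Nat.log2_up m) /\
     (forall sched, valid_sched n sched -> num_incs (events k sched) <= m ->
        linearizable k (events k sched)) /\
     (forall sigma : nat -> nat * OpKind,
        (forall t, fst (sigma t) < n) ->
        (forall t, num_incs (events k (prefix sigma t)) <= m) ->
        forall p, (forall t, exists t', t <= t' /\ fst (sigma t') = p) ->
        forall N, exists t,
          N <= length (filter (is_res_of p) (events k (prefix sigma t))))) /\
  (forall c : nat, exists C : nat,
     forall (n m : nat) (k : R) (g : nat) sched,
       4 <= m -> (sqrt (2 * INR n) <= k)%R ->
       g <= c * Nat.log2 (Nat.log2_up m) ->
       valid_sched n sched -> num_incs (events k sched) <= m ->
       forall i p o, nth_error (events k sched) i = Some (EInv p o) ->
         op_cost g (events k sched) i p <= C * Nat.log2 (Nat.log2 m)).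
Proof.
  split.
  - intros n m k Hm Hk. split; [|split].
    + intros sched Hv Hle p v Hin. destruct (INV_reach n k 0 sched Hv Hk) as (L&cur&I).
      pose proof (i_mw _ _ _ _ _ _ _ I p v Hin) as H.
      assert (v <= Nat.log2 m) by (apply Nat.log2_le_pow2; lia).
      pose proof (Nat.le_log2_log2_up m). lia.
    + intros sched Hv Hle. destruct (INV_reach n k 0 sched Hv Hk) as (L&cur&I).
      exists L. repeat split.
      * apply (i_nodup _ _ _ _ _ _ _ I).
      * intros i r Hin. destruct (i_L _ _ _ _ _ _ _ I i r Hin) as (_&[p Hp]&H3). exists p; split; auto.
      * apply (i_comp _ _ _ _ _ _ _ I).
      * apply (i_rt _ _ _ _ _ _ _ I).
      * apply (i_legal _ _ _ _ _ _ _ I).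
    + intros sigma _ _ p Hinf N. apply (waitfree k sigma p Hinf N).
  - intros c. exists (2 * c + 2). intros n m k g sched Hm Hk Hg Hv Hle i p o Hn.
    destruct (INV_reach n k g sched Hv Hk) as (L&cur&I).
    pose proof (i_cost _ _ _ _ _ _ _ I i p o Hn) as HC.
    assert (cost_from g p (skipn (S i) (events k sched)) <= S g).
    { destruct HC as [[_ H]|(_&_&H)]; lia. }
    unfold op_cost. pose proof (arith c m g Hm Hg). lia.
Qed.
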